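(* For the unit-sum normalization, there is an absolute constant $C>0$ such that for every $n\ge1$ and every ordinal mechanism $J$ (deterministic or randomized, not necessarily truthful) on $n$ agents and $n$ items, $ar(J)\le C/\sqrt n$.
   Context: Agents $N=\{1,\dots,n\}$, items $M=\{1,\dots,n\}$, outcomes are bijections $\mu$ ($O$ the set of outcomes). Unit-sum valuation functions: injective $u_i:M\to\mathbb R_{\ge0}$ with $\sum_j u_i(j)=1$; $V^n$ the set of profiles. A mechanism maps each profile to a distribution over $O$; it is ordinal if its output distribution is unchanged when any one agent's valuation function is replaced by another inducing the same ordering of the items. $ar(J)=\inf_{\mathbf u\in V^n}\mathbb E[\sum_i u_i(J(\mathbf u)_i)]/\max_{\mu\in O}\sum_i u_i(\mu_i)$. *)

(* Defs.v *)
From Stdlib Require Import Reals.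
From mathcomp Require Import all_boot perm.
Set Implicit Arguments. Unset Strict Implicit. Unset Printing Implicit Defensive.

Open Scope R_scope.

(* Agents and items are both 'I_n; outcomes are bijections agent -> item. *)
Definition agent n := 'I_n.
Definition item n := 'I_n.
Definition outcome n := {perm 'I_n}.

(* A profile of valuation functions: u i j = value of agent i for item j. *)
Definition profile n := 'I_n -> 'I_n -> R.

Definition Rsumf (T : finType) (f : T -> R) : R :=
  foldr Rplus 0 (map f (enum T)).

Definition Rmaxf (T : finType) (f : T -> R) : R :=
  foldr Rmax 0 (map f (enum T)).

Definition unit_sum_val n (v : 'I_n -> R) : Prop :=
  injective v /\ (forall j, 0 <= v j) /\ Rsumf v = 1.

Definition valid_profile n (u : profile n) : Prop :=
  forall i, unit_sum_val (u i).

Definition mechanism n := profile n -> outcome n -> R.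

Definition is_distribution n (p : outcome n -> R) : Prop :=
  (forall mu, 0 <= p mu) /\ Rsumf p = 1.

Definition is_mechanism n (J : mechanism n) : Prop :=
  forall u, valid_profile u -> is_distribution (J u).

Definition same_ordering n (v w : 'I_n -> R) : Prop :=
  forall j k, v j < v k <-> w j < w k.

Definition ordinal_mech n (J : mechanism n) : Prop :=
  forall (u u' : profile n) (i : 'I_n),
    valid_profile u -> valid_profile u' ->
    (forall k, k <> i -> u' k = u k) ->
    same_ordering (u i) (u' i) ->
    J u = J u'.

Definition welfare n (u : profile n) (mu : outcome n) : R :=
  Rsumf (fun i : 'I_n => u i (mu i)).

Definition exp_welfare n (J : mechanism n) (u : profile n) : R :=
  Rsumf (fun mu : outcome n => J u mu * welfare u mu).

Definition opt_welfare n (u : profile n) : R :=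
  Rmaxf (fun mu : outcome n => welfare u mu).

(* ar(J) <= c, written out: the infimum over V^n of the ratio is at most c *)
Definition ar_le n (J : mechanism n) (c : R) : Prop :=
  forall eps, 0 < eps ->
    exists u : profile n, valid_profile u /\
      exp_welfare J u / opt_welfare u < c + eps.

(* Main.v *)
Require Import Defs.
From Stdlib Require Import Reals Lra.
From Stdlib Require Import FunctionalExtensionality IndefiniteDescription Classical.
From mathcomp Require Import all_boot perm zify.
From HB Require Import structures.
Open Scope R_scope.
Set Implicit Arguments. Unset Strict Implicit. Unset Printing Implicit Defensive.

HB.instance Definition _ := Monoid.isComLaw.Build R 0 Rplus
  (fun x y z => esym (Rplus_assoc x y z)) Rplus_comm Rplus_0_l.

Lemma RsumfE (T : finType) (f : T -> R) : Rsumf f = \big[Rplus/0]_(i : T) f i.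
Proof. rewrite /Rsumf foldrE big_map big_enum. apply: eq_bigl => i; by []. Qed.

Lemma sum_le (T : finType) (f g : T -> R) : (forall i, f i <= g i) ->
  \big[Rplus/0]_(i : T) f i <= \big[Rplus/0]_(i : T) g i.
Proof.
move=> H; apply: (big_ind2 (fun x y => x <= y)); [lra | intros; lra | move=> i _; exact: H].
Qed.

Lemma sum_ge0 (T : finType) (f : T -> R) : (forall i, 0 <= f i) ->
  0 <= \big[Rplus/0]_(i : T) f i.
Proof. move=> H; apply: (big_ind (fun x => 0 <= x)); [lra | intros; lra | move=> i _; exact: H]. Qed.

Lemma sum_scale (T : finType) (c : R) (f : T -> R) :
  \big[Rplus/0]_(i : T) (c * f i) = c * \big[Rplus/0]_(i : T) f i.
Proof.
apply: (big_ind2 (fun x y => x = c * y)); [ring | move=> ? ? ? ? -> ->; ring | by []].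
Qed.

Lemma sum_const m (c : R) : \big[Rplus/0]_(i < m) c = INR m * c.
Proof. rewrite big_const_ord; elim: m => [|m IH]; [rewrite /=; ring | rewrite iterS IH S_INR; ring]. Qed.

Lemma sum_ind1 (T : finType) (a : T) (c : R) :
  \big[Rplus/0]_(i : T) (if i == a then c else 0) = c.
Proof. rewrite (bigD1 a) //= eqxx big1; [ring | by move=> i /negbTE ->]. Qed.

Lemma at_most_one (T : finType) (f : T -> bool) (c : R) : 0 <= c ->
  (forall x y, f x -> f y -> x = y) ->
  \big[Rplus/0]_(i : T) (if f i then c else 0) <= c.
Proof.
move=> hc H; case: (pickP f) => [x fx | nf].
- rewrite (bigD1 x) //= fx big1; first lra.
  move=> y hy; case fy: (f y) => //.
  by rewrite (H _ _ fy fx) eqxx in hy.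
- rewrite big1; first lra. by move=> y _; rewrite nf.
Qed.

Lemma pos_sum k (g : 'I_k -> R) : (0 < k)%N -> (forall m, 0 < g m) ->
  0 < \big[Rplus/0]_(m < k) g m.
Proof.
case: k g => [//|k] g _ H; rewrite big_ord_recl.
apply: Rplus_lt_le_0_compat; first exact: H.
apply: sum_ge0 => i; exact: Rlt_le _ _ (H _).
Qed.

Lemma Rmaxf_ge (T : finType) (f : T -> R) x : f x <= Rmaxf f.
Proof.
rewrite /Rmaxf. have: x \in enum T by rewrite mem_enum.
elim: (enum T) => //= y l IH; rewrite inE => /orP [/eqP <- | /IH h].
- apply Rmax_l.
- eapply Rle_trans; [exact h | apply Rmax_r].
Qed.

Lemma div_le a b D m : 0 < D -> 0 < m -> a * m <= b * D -> a / D <= b / m.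
Proof.
move=> hD hm h; rewrite /Rdiv; apply (Rmult_le_reg_l (D*m)); first nra.
replace (D*m*(a*/D)) with (a*m) by (field; lra).
replace (D*m*(b*/m)) with (b*D) by (field; lra). lra.
Qed.

Lemma ord_same n (J : mechanism n) u u' : ordinal_mech J ->
  valid_profile u -> valid_profile u' -> (forall i, same_ordering (u i) (u' i)) ->
  J u = J u'.
Proof.
move=> HJ Hu Hu' Hs.
pose w (m : nat) : profile n := fun i => if (i < m)%N then u' i else u i.
have wv : forall m, valid_profile (w m) by move=> m i; rewrite /w; case: ifP.
have step : forall m, J (w m) = J (w m.+1).
  move=> m; case: (ltnP m n) => hm.
  - apply: (HJ _ _ (Ordinal hm)) => //.
    + move=> k hk; rewrite /w ltnS leq_eqVlt.
      have -> : (nat_of_ord k == m) = false.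
        apply/eqP => e; apply: hk; exact: val_inj.
      by [].
    + rewrite /w /= ltnn ltnSn; exact: Hs.
  - congr J; apply: functional_extensionality => i; rewrite /w.
    have h1 : (i < m)%N := leq_trans (ltn_ord i) hm.
    by rewrite h1 ltnS (ltnW h1).
have e0 : w 0%N = u by apply: functional_extensionality => i.
have en : w n = u' by apply: functional_extensionality => i; rewrite /w ltn_ord.
have : forall m, J u = J (w m).
  elim => [|m IH]; [by rewrite e0 | by rewrite IH step].
by move/(_ n); rewrite en.
Qed.

Lemma fin_choice (A : finType) (B : Type) (P : A -> B -> Prop) :
  (forall a, exists b, P a b) -> exists f : A -> B, forall a, P a (f a).
Proof.
move=> H; exists (fun a => proj1_sig (constructive_indefinite_description _ (H a))).
move=> a; exact: proj2_sig (constructive_indefinite_description _ (H a)).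
Qed.

Section Vals.
Variable n : nat.
Hypothesis hn : (0 < n)%N.

Definition num (t j : 'I_n) : R := INR n + INR j + (if j == t then INR n else 0).
Definition Dn (t : 'I_n) : R := \big[Rplus/0]_(j : 'I_n) num t j.
Definition U (t j : 'I_n) : R := num t j / Dn t.
Definition V (t j : 'I_n) : R := U t j / 2 + (if j == t then /2 else 0).

Lemma INRn_pos : 0 < INR n.
Proof. apply: lt_0_INR; apply/ltP; exact: hn. Qed.

Lemma INR_ord (j : 'I_n) : 0 <= INR j /\ INR j < INR n.
Proof. split; [exact: pos_INR | apply: lt_INR; apply/ltP; exact: ltn_ord]. Qed.

Lemma num_ge t j : INR n <= num t j.
Proof. rewrite /num; have := INR_ord j; have := INRn_pos; case: (j == t); lra. Qed.

Lemma num_le t j : num t j <= 3 * INR n.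
Proof. rewrite /num; have := INR_ord j; have := INRn_pos; case: (j == t); lra. Qed.

Lemma Dn_ge t : INR n * INR n <= Dn t.
Proof. rewrite /Dn -sum_const; apply: sum_le => j; exact: num_ge. Qed.

Lemma Dn_pos t : 0 < Dn t.
Proof. have := Dn_ge t; have := INRn_pos; nra. Qed.

Lemma U_ge0 t j : 0 <= U t j.
Proof. rewrite /U /Rdiv; apply: Rmult_le_pos; [have := num_ge t j; have := INRn_pos; lra|].
apply: Rlt_le; apply: Rinv_0_lt_compat; exact: Dn_pos. Qed.

Lemma U_le t j : U t j <= 3 / INR n.
Proof. rewrite /U; apply: div_le; [exact: Dn_pos | exact: INRn_pos |].
have := num_le t j; have := Dn_ge t; have := INRn_pos; have := num_ge t j; nra. Qed.

Lemma U_sum t : \big[Rplus/0]_(j : 'I_n) U t j = 1.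
Proof.
rewrite (eq_bigr (fun j => / Dn t * num t j)); last by move=> j _; rewrite /U /Rdiv Rmult_comm.
rewrite sum_scale -/(Dn t); field; have := Dn_pos t; lra.
Qed.

Lemma U_top t j : j != t -> U t j < U t t.
Proof.
move=> hj; rewrite /U /Rdiv; apply: Rmult_lt_compat_r.
  apply: Rinv_0_lt_compat; exact: Dn_pos.
rewrite /num eqxx (negbTE hj); have := INR_ord j; have := INR_ord t; lra.
Qed.

Lemma U_inj t : injective (U t).
Proof.
move=> j j' e.
have e' : num t j = num t j'.
  have := Dn_pos t => hD.
  have -> : num t j = U t j * Dn t by rewrite /U; field; lra.
  rewrite e /U; field; lra.
move: e'; rewrite /num.
have := INR_ord j; have := INR_ord j'; have := INR_ord t.
case: eqP => [->|hj]; case: eqP => [->|hj'] //.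
- move=> *; lra.
- move=> *; lra.
- move=> _ _ _ h; apply: val_inj => /=; apply: INR_eq; lra.
Qed.

Lemma U_valid t : unit_sum_val (U t).
Proof. split; [exact: U_inj | split; [exact: U_ge0 | by rewrite RsumfE U_sum]]. Qed.

Lemma V_le t j : V t j <= 3 / INR n + (if j == t then 1 else 0).
Proof. rewrite /V; have := U_le t j; have := U_ge0 t j; case: (j == t); lra. Qed.

Lemma V_ge t j : 0 <= V t j.
Proof. rewrite /V; have := U_ge0 t j; case: (j == t); lra. Qed.

Lemma V_top t : /2 <= V t t.
Proof. rewrite /V eqxx; have := U_ge0 t t; lra. Qed.

Lemma V_inj t : injective (V t).
Proof.
move=> j j'; rewrite /V.
case: eqP => [->|hj]; case: eqP => [->|hj'] //.
- have := U_top (introN eqP hj'); lra.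
- have := U_top (introN eqP hj); lra.
- move=> h; apply: (@U_inj t); lra.
Qed.

Lemma V_valid t : unit_sum_val (V t).
Proof.
split; [exact: V_inj | split; [exact: V_ge |]].
rewrite RsumfE /V big_split /=.
rewrite (eq_bigr (fun j => /2 * U t j)); last by move=> j _; rewrite /Rdiv Rmult_comm.
rewrite sum_scale U_sum sum_ind1; field.
Qed.

Lemma UV_same t : same_ordering (U t) (V t).
Proof.
move=> j k; rewrite /V.
case: eqP => [->|hj]; case: eqP => [->|hk].
- split; lra.
- have := U_top (introN eqP hk); split; lra.
- have := U_top (introN eqP hj); split; lra.
- split; lra.
Qed.

End Vals.

Lemma sum_ge0P (T : finType) (P : pred T) (f : T -> R) : (forall i, 0 <= f i) ->
  0 <= \big[Rplus/0]_(i : T | P i) f i.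
Proof. move=> H; apply: (big_ind (fun x => 0 <= x)); [lra | intros; lra | move=> i _; exact: H]. Qed.

Lemma perm_ext n k (a b : 'I_k -> 'I_n) : injective a -> injective b ->
  exists mu : {perm 'I_n}, forall g, mu (a g) = b g.
Proof.
move=> ha hb.
have : forall m, exists mu : {perm 'I_n}, forall g : 'I_k, (g < m)%N -> mu (a g) = b g.
  elim => [|m [mu Hmu]]; first by exists 1%g.
  case: (ltnP m k) => hm; last first.
    exists mu => g hg; apply: Hmu; exact: leq_trans (ltn_ord g) hm.
  pose gm := Ordinal hm.
  exists (mu * tperm (mu (a gm)) (b gm))%g => g hg; rewrite permM.
  case: (g =P gm) => [->|hne]; first by rewrite tpermL.
  have hgm : (g < m)%N.
    rewrite ltnS leq_eqVlt in hg; case/orP: hg => // /eqP e; exfalso; apply: hne; exact: val_inj.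
  rewrite (Hmu _ hgm) tpermD //.
  - apply/eqP => e; rewrite -(Hmu _ hgm) in e; apply: hne; apply: ha; exact: (esym (perm_inj e)).
  - apply/eqP => e; apply: hne; apply: hb; by rewrite e.
move/(_ k) => [mu Hmu]; exists mu => g; exact: Hmu.
Qed.

Lemma main_bound n k (J : mechanism n.+1) : (0 < k)%N -> (k * k <= n.+1)%N ->
  is_mechanism J -> ordinal_mech J ->
  exists u, valid_profile u /\ exp_welfare J u <= 4 /\ INR k / 2 <= opt_welfare u.
Proof.
move=> hk hkk HJ HO.
have hn : (0 < n.+1)%N by [].
have hkn : (k <= n.+1)%N := leq_trans (leq_pmull _ hk) hkk.
have hkR : 0 < INR k by apply: lt_0_INR; apply/ltP.
have hNR : 0 < INR n.+1 by apply: lt_0_INR; apply/ltP.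
pose top (i : 'I_n.+1) : 'I_n.+1 := inord (if (i < k * k)%N then i %% k else 0%N).
pose u0 : profile n.+1 := fun i => U (top i).
have u0v : valid_profile u0 by move=> i; exact: U_valid.
pose p := J u0.
have [p0 p1] : is_distribution p := HJ _ u0v.
rewrite RsumfE in p1.
pose cand (g m : 'I_k) : 'I_n.+1 := inord (g + k * m).
have bnd : forall g m : 'I_k, (g + k * m < k * k)%N.
  move=> g m; have := ltn_ord g; have := ltn_ord m; nia.
have candv : forall g m, (cand g m : nat) = (g + k * m)%N.
  move=> g m; rewrite /cand inordK //; exact: leq_trans (bnd g m) hkk.
have topc : forall g m, top (cand g m) = inord g.
  move=> g m; rewrite /top /=. rewrite (candv g m) bnd; congr inord.
  by rewrite addnC mulnC modnMDl (modn_small (ltn_ord g)).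
pose Prob (i j : 'I_n.+1) := \big[Rplus/0]_(mu : {perm 'I_n.+1}) (p mu * (if mu i == j then 1 else 0)).
have sel_ex : forall g : 'I_k, exists m : 'I_k, Prob (cand g m) (inord g) <= / INR k.
  move=> g.
  have hsum : \big[Rplus/0]_(m < k) Prob (cand g m) (inord g) <= 1.
    rewrite /Prob exchange_big /=.
    apply: (Rle_trans _ (\big[Rplus/0]_(mu : {perm 'I_n.+1}) p mu)); last by rewrite p1; lra.
    apply: sum_le => mu.
    rewrite sum_scale.
    have := p0 mu.
    have : \big[Rplus/0]_(m < k) (if mu (cand g m) == inord g then 1 else 0) <= 1.
      apply: at_most_one; first lra.
      move=> x y /eqP hx /eqP hy; rewrite -hy in hx.
      have := perm_inj hx; move/(congr1 (@nat_of_ord _)); rewrite !candv.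
      move/eqP; rewrite eqn_add2l eqn_pmul2l // => /eqP; exact: val_inj.
    move=> hS hp; rewrite -[X in _ <= X]Rmult_1_r; apply: Rmult_le_compat_l => //.
  apply: NNPP => hno.
  have hall : forall m : 'I_k, 0 < Prob (cand g m) (inord g) + - / INR k.
    move=> m; have := not_ex_all_not _ _ hno m; move/Rnot_le_lt; lra.
  have := pos_sum hk hall.
  rewrite big_split /= sum_const.
  have -> : INR k * - / INR k = -1 by field; lra.
  move=> h; apply: (Rlt_not_le _ _ h); apply: (Rplus_le_reg_r 1).
  rewrite Rplus_0_l Rplus_assoc Rplus_opp_l Rplus_0_r; exact: hsum.
have [sel Hsel] := fin_choice sel_ex.
pose t (g : 'I_k) := cand g (sel g).
have topt : forall g, top (t g) = inord g by move=> g; exact: topc.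
have inordk : forall g g' : 'I_k, (inord g : 'I_n.+1) = inord g' -> g = g'.
  move=> g g' e; apply: val_inj; move: (congr1 val e).
  have hg : (g < n.+1)%N := leq_trans (ltn_ord g) hkn.
  have hg' : (g' < n.+1)%N := leq_trans (ltn_ord g') hkn.
  by rewrite /= (inordK hg) (inordK hg').
have tinj : injective t.
  move=> g g' e; apply: inordk; by rewrite -!topt e.
pose tallb (i : 'I_n.+1) := [exists g, i == t g].
pose u1 : profile n.+1 := fun i => if tallb i then V (top i) else U (top i).
have u1v : valid_profile u1.
  by move=> i; rewrite /u1; case: ifP => _; [exact: V_valid | exact: U_valid].
have eJ : J u0 = J u1.
  apply: ord_same => // i; rewrite /u0 /u1; case: ifP => _; [exact: UV_same | move=> a b; tauto].
exists u1; split => //; split.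
- rewrite /exp_welfare RsumfE -eJ -/p.
  have wb : forall mu : {perm 'I_n.+1}, welfare u1 mu <=
      3 + \big[Rplus/0]_(g < k) (if mu (t g) == inord g then 1 else 0).
    move=> mu; rewrite /welfare RsumfE.
    have step : forall i, u1 i (mu i) <= 3 / INR n.+1 +
        \big[Rplus/0]_(g < k) (if (i == t g) && (mu i == inord g) then 1 else 0).
      move=> i; rewrite /u1; case: ifP => ht.
      + case/existsP: ht => g0 /eqP hi; subst i.
        apply: (Rle_trans _ _ _ (V_le hn _ _)).
        rewrite (bigD1 g0) // eqxx andTb topt.
        have : 0 <= \big[Rplus/0]_(g < k | g != g0)
            (if (t g0 == t g) && (mu (t g0) == inord g) then 1 else 0).
          by apply: sum_ge0P => g; case: ifP => _; lra.
        move=> h; apply: Rplus_le_compat_l; rewrite -[X in X <= _]Rplus_0_r.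
        apply: Rplus_le_compat_l; exact: h.
      + apply: (Rle_trans _ _ _ (U_le hn _ _)).
        have : 0 <= \big[Rplus/0]_(g < k) (if (i == t g) && (mu i == inord g) then 1 else 0).
          by apply: sum_ge0 => g; case: ifP => _; lra.
        lra.
    apply: (Rle_trans _ _ _ (sum_le step)).
    rewrite big_split /= sum_const exchange_big /=.
    have -> : INR n.+1 * (3 / INR n.+1) = 3 by field; lra.
    apply: Rplus_le_compat_l; apply: Req_le; apply: eq_bigr => g _.
    rewrite (eq_bigr (fun i => if i == t g then (if mu (t g) == inord g then 1 else 0) else 0)).
      by rewrite sum_ind1.
    move=> i _; case: (i =P t g) => [->|hne] //=.
  apply: (Rle_trans _ (\big[Rplus/0]_(mu : {perm 'I_n.+1})
      (p mu * (3 + \big[Rplus/0]_(g < k) (if mu (t g) == inord g then 1 else 0))))).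
    apply: sum_le => mu; apply: Rmult_le_compat_l; [exact: p0 | exact: wb].
  rewrite (eq_bigr (fun mu => 3 * p mu + \big[Rplus/0]_(g < k)
      (p mu * (if mu (t g) == inord g then 1 else 0)))); last first.
    move=> mu _; rewrite sum_scale Rmult_plus_distr_l (Rmult_comm (p mu) 3); reflexivity.
  rewrite big_split /= sum_scale p1 exchange_big /=.
  have : \big[Rplus/0]_(g < k) Prob (t g) (inord g) <= \big[Rplus/0]_(g < k) / INR k.
    by apply: sum_le => g; exact: Hsel.
  rewrite sum_const /Prob.
  have -> : INR k * / INR k = 1 by field; lra.
  move=> h; apply: (Rle_trans _ (3*1 + 1)); [apply: Rplus_le_compat_l; exact: h | lra].
- have [mu Hmu] := @perm_ext n.+1 k t (fun g => inord g) tinj inordk.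
  apply: (Rle_trans _ (welfare u1 mu)); last exact: Rmaxf_ge.
  rewrite /welfare RsumfE.
  apply: (Rle_trans _ (\big[Rplus/0]_(i : 'I_n.+1) \big[Rplus/0]_(g < k) (if i == t g then /2 else 0))).
    rewrite exchange_big /=.
    rewrite (eq_bigr (fun g => /2)); last by move=> g _; rewrite sum_ind1.
    rewrite sum_const /Rdiv; lra.
  apply: sum_le => i; rewrite /u1; case: ifP => ht.
  + case/existsP: ht => g0 /eqP hi; subst i.
    apply: (Rle_trans _ (/2)).
      apply: at_most_one; first lra.
      move=> x y /eqP hx /eqP hy; apply: tinj; by rewrite -hx -hy.
    rewrite topt Hmu; exact: V_top.
  + have hnot : forall g, (i == t g) = false.
      move=> g; apply/negbTE; move/negbT: ht => /existsPn; exact.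
    rewrite big1; [exact: U_ge0 | move=> g _; by rewrite hnot].
Qed.

Theorem lemma8 :
  exists C : R, 0 < C /\
    forall (n : nat), (1 <= n)%nat ->
    forall J : mechanism n, is_mechanism J -> ordinal_mech J ->
      ar_le J (C / sqrt (INR n)).
Proof.
exists 16; split; first lra.
case=> [|n] hn // J HJ HO eps heps.
have := Nat.sqrt_spec n.+1 (Nat.le_0_l _).
set k := Nat.sqrt n.+1 => -[hk1 hk2].
have hk : (0 < k)%N by apply/ltP; nia.
have hkk : (k * k <= n.+1)%N by apply/leP; lia.
have [u [uv [he ho]]] := main_bound hk hkk HJ HO.
exists u; split => //.
have hkR : 1 <= INR k.
  change 1 with (INR 1); apply: le_INR; apply/leP; exact: hk.
have hs : sqrt (INR n.+1) <= 2 * INR k.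
  rewrite -(sqrt_square (2 * INR k)); last lra.
  apply: sqrt_le_1_alt.
  have : INR n.+1 < INR (S k * S k) by apply: lt_INR.
  rewrite mult_INR !S_INR. nra.
have hsp : 0 < sqrt (INR n.+1) by apply: sqrt_lt_R0; apply: lt_0_INR; lia.
have hopt : 0 < opt_welfare u by lra.
apply: (Rle_lt_trans _ (4 / opt_welfare u)).
  rewrite /Rdiv; apply: Rmult_le_compat_r; [apply: Rlt_le; exact: Rinv_0_lt_compat | exact: he].
apply: (Rle_lt_trans _ (16 / sqrt (INR n.+1))); last lra.
apply: div_le => //; lra.
Qed.
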